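(* (Generalized Goursat lemma.) Let $G$ be a pseudosimple group, $k\ge 1$, and let $H\subseteq G^{[k]}$ be a subgroup that surjects onto each of the $k$ coordinate factors $G$. Then: (1) $H$ is isomorphic over $G^{\mathrm{ab}}$ to $G^{[w]}$ for some $w\le k$; (2) there are a surjection $f:\{1,\dots,k\}\to\{1,\dots,w\}$ and automorphisms $\varphi_1,\dots,\varphi_k$ of $G$ over $G^{\mathrm{ab}}$ such that $H$ is the image of $G^{[w]}$ under $(g_1,\dots,g_w)\mapsto(\varphi_1(g_{f(1)}),\dots,\varphi_k(g_{f(k)}))$.
   Context: $G'$ is the derived subgroup, $G^{\mathrm{ab}}=G/G'$. $G$ is pseudosimple if it is a finite centerless group, $G'$ is isomorphic to a power of a nonabelian simple group, and $G/N$ is abelian for every nontrivial normal subgroup $N$. $G^{[m]}=G\times_{G^{\mathrm{ab}}}\cdots\times_{G^{\mathrm{ab}}}G$ ($m$ factors) is the fiber power, mapping to $G^{\mathrm{ab}}$ via any coordinate; subgroups of it map to $G^{\mathrm{ab}}$ by restriction. For groups $G_1,G_2$ with homomorphisms $\pi_1,\pi_2$ to $Q$, an isomorphism over $Q$ is an isomorphism $i:G_1\to G_2$ with $\pi_2\circ i=\pi_1$; an automorphism of $G$ over $G^{\mathrm{ab}}$ is one inducing the identity on $G^{\mathrm{ab}}$. *)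

(* Defs.v *)
From HB Require Import structures.
From mathcomp Require Import all_boot all_fingroup commutator center gseries.
Set Implicit Arguments. Unset Strict Implicit. Unset Printing Implicit Defensive.
Local Open Scope group_scope.

Notation tupG gT m := {dffun forall i : 'I_m, (fun _ : 'I_m => gT) i}.

Definition pseudosimple (gT : finGroupType) (G : {group gT}) : Prop :=
  'Z(G) = 1 /\
  (exists (sT : finGroupType) (S : {group sT}) (n : nat),
      simple S /\ ~~ abelian S /\
      G^`(1) \isog setXn (fun _ : 'I_n => S)) /\
  (forall N : {group gT}, N <| G -> N :!=: 1 -> abelian (G / N)).

(* The fiber power G^[m] = G x_{G^ab} ... x_{G^ab} G (m factors), as a
   subset of the m-fold direct power: tuples in G^m whose coordinates all
   have the same image in G^ab = G / G'. *)
Definition fiberpow (gT : finGroupType) (G : {group gT}) (m : nat)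
  : {set tupG gT m} :=
  setXn (fun _ : 'I_m => G) :&:
  [set x : tupG gT m | [forall i, [forall j,
      coset G^`(1) (x i) == coset G^`(1) (x j)]]].

Definition aut_over_ab (gT : finGroupType) (G : {group gT}) (a : {perm gT})
  : Prop :=
  a \in Aut G /\ forall g, g \in G -> coset G^`(1) (a g) = coset G^`(1) g.

(* Main.v *)
Require Import Defs.
From HB Require Import structures.
From mathcomp Require Import all_boot all_fingroup commutator center gseries.
Set Implicit Arguments. Unset Strict Implicit. Unset Printing Implicit Defensive.
Local Open Scope group_scope.

Lemma tup_conj (gT : finGroupType) m (x y : tupG gT m) l : (x ^ y) l = (x l) ^ (y l).
Proof. by rewrite /conjg !mulg_ffun invg_ffun. Qed.

Lemma tup_comm (gT : finGroupType) m (x y : tupG gT m) l : [~ x, y] l = [~ x l, y l].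
Proof. by rewrite /commg mulg_ffun invg_ffun tup_conj. Qed.

Lemma tup1 (gT : finGroupType) m l : (1 : tupG gT m) l = 1.
Proof. by rewrite oneg_ffun. Qed.

Lemma fiberpowP (gT : finGroupType) (G : {group gT}) m (x : tupG gT m) :
  reflect ((forall i, x i \in G) /\ (forall i j, coset G^`(1) (x i) = coset G^`(1) (x j)))
          (x \in fiberpow G m).
Proof.
rewrite /fiberpow inE in_setXn inE; apply: (iffP andP).
  case=> /forallP h1 /forallP h2; split=> // i j.
  by move/forallP: (h2 i) => /(_ j) /eqP.
case=> h1 h2; split; first by apply/forallP.
by apply/forallP=> i; apply/forallP=> j; rewrite (h2 i j).
Qed.

Lemma ps_min (gT : finGroupType) (G : {group gT}) : pseudosimple G ->
  forall N : {group gT}, N <| G -> N :!=: 1 -> G^`(1) \subset N.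
Proof.
case=> _ [_ h] N nN ntN; apply: der1_min; first exact: normal_norm.
exact: h.
Qed.

Lemma ps_nonab (gT : finGroupType) (G : {group gT}) : pseudosimple G ->
  G^`(1) :!=: 1 -> ~~ abelian G^`(1).
Proof.
case=> _ [[sT [S [n [simS [nabS iso]]]]] _] ntD; apply/negP => abD.
rewrite (isog_abelian iso) in abD.
case: n iso abD => [|n] iso abD.
  move/negP: ntD; apply; apply/eqP; apply: card_le1_trivg.
  rewrite (card_isog iso).
  apply/card_le1_eqP => x y _ _; apply/ffunP; by case.
move/negP: nabS; apply.
have := morphim_abelian (@dffun_morphism _ (fun _ : 'I_n.+1 => sT) ord0) abD.
by rewrite morphim_dffunXn.
Qed.

Lemma fill (gT : finGroupType) (G : {group gT}) k (H : {group tupG gT k})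
  (P : pred (tupG gT k)) (i : 'I_k) :
  pseudosimple G ->
  (forall x, x \in H -> x i \in G) ->
  (forall g, g \in G -> exists2 x, x \in H & x i = g) ->
  P 1 -> (forall x y, P x -> P y -> P (x * y)) -> (forall x y, P x -> P (x ^ y)) ->
  (exists2 x, x \in H & P x && (x i != 1)) ->
  forall a, a \in G^`(1) -> exists2 x, x \in H & P x && (x i == a).
Proof.
move=> psG HG Hsurj P1 PM PJ [x0 Hx0 /andP[Px0 nt]] a Da.
pose S := [set (x : tupG gT k) i | x in [set x in H | P x]].
have gS : group_set S.
  apply/group_setP; split.
    by apply/imsetP; exists 1; rewrite ?inE ?group1 ?P1 // tup1.
  move=> _ _ /imsetP[x /setIdP[Hx Px] ->] /imsetP[y /setIdP[Hy Py] ->].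
  apply/imsetP; exists (x*y); last by rewrite mulg_ffun.
  by rewrite inE; apply/andP; split; [apply: groupM | apply: PM].
pose N := Group gS.
have nNG : N <| G.
  rewrite /normal; apply/andP; split.
    by apply/subsetP => _ /imsetP[x /setIdP[Hx _] ->]; exact: HG.
  apply/subsetP => g Gg; rewrite inE; apply/subsetP => z.
  rewrite mem_conjg => /imsetP[x /setIdP[Hx Px] ez].
  have [y Hy yi] := Hsurj g Gg.
  apply/imsetP; exists (x ^ y); first by rewrite inE groupJ ?PJ.
  by rewrite tup_conj -ez yi conjgKV.
have ntN : N :!=: 1.
  apply/trivgPn; exists (x0 i) => //.
  by apply/imsetP; exists x0; rewrite ?inE ?Hx0.
have := ps_min psG nNG ntN => /subsetP /(_ a Da) /imsetP[x /setIdP[Hx Px] ->].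
by exists x; rewrite ?Px ?eqxx.
Qed.

Lemma ker_proj (gT : finGroupType) k (l : 'I_k) (x : tupG gT k) :
  (x \in 'ker (@dffun_morphism _ (fun _ => gT) l)) = (x l == 1).
Proof. by rewrite !inE. Qed.

Lemma inHK (gT : finGroupType) k (H : {group tupG gT k}) (l : 'I_k) (x : tupG gT k) :
  (x \in H :&: 'ker (@dffun_morphism _ (fun _ => gT) l)) = (x \in H) && (x l == 1).
Proof. by rewrite in_setI ker_proj. Qed.

Lemma card_ker_proj (gT : finGroupType) (G : {group gT}) k (H : {group tupG gT k}) l :
  [set (x : tupG gT k) l | x in H] = G ->
  (#|H :&: 'ker (@dffun_morphism _ (fun _ => gT) l)| * #|G|)%N = #|H|.
Proof.
move=> hl.
have e : @dffun_morphism _ (fun _ => gT) l @* H = G by rewrite morphimEsub ?subsetT.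
by rewrite -e card_morphim setTI LagrangeI.
Qed.

Lemma rel_sym (gT : finGroupType) (G : {group gT}) k (H : {group tupG gT k}) i j :
  (forall i, [set (x : tupG gT k) i | x in H] = G) ->
  (forall x, x \in H -> x j = 1 -> x i = 1) ->
  forall x, x \in H -> x i = 1 -> x j = 1.
Proof.
move=> hs hij x Hx xi.
have ci := card_ker_proj (hs i); have cj := card_ker_proj (hs j).
set Ki := H :&: _ in ci; set Kj := H :&: _ in cj.
have sub : Kj \subset Ki.
  apply/subsetP => y; rewrite !inHK => /andP[Hy yj].
  by rewrite Hy /= hij // (eqP yj).
have ce : #|Ki| = #|Kj|.
  move: ci; rewrite -cj; move/eqP; rewrite eqn_pmul2r ?cardG_gt0 //; exact/eqP.
have eK : Kj = Ki by apply/eqP; rewrite eqEcard sub ce leqnn.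
have : x \in Ki by rewrite inHK Hx xi eqxx.
by rewrite -eK inHK => /andP[_ /eqP].
Qed.

Lemma allP1 (gT : finGroupType) k (s : seq 'I_k) :
  all (fun l => (1 : tupG gT k) l == 1) s.
Proof. by apply/allP => l _; rewrite tup1. Qed.

Lemma allPM (gT : finGroupType) k (s : seq 'I_k) (x y : tupG gT k) :
  all (fun l => x l == 1) s -> all (fun l => y l == 1) s ->
  all (fun l => (x * y) l == 1) s.
Proof.
move=> /allP hx /allP hy; apply/allP => l ls.
by rewrite mulg_ffun (eqP (hx l ls)) (eqP (hy l ls)) mulg1.
Qed.

Lemma allPJ (gT : finGroupType) k (s : seq 'I_k) (x y : tupG gT k) :
  all (fun l => x l == 1) s -> all (fun l => (x ^ y) l == 1) s.
Proof.
move=> /allP hx; apply/allP => l ls.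
by rewrite tup_conj (eqP (hx l ls)) conj1g.
Qed.

Lemma allPRl (gT : finGroupType) k (s : seq 'I_k) (x y : tupG gT k) :
  all (fun l => x l == 1) s -> all (fun l => [~ x, y] l == 1) s.
Proof.
move=> /allP hx; apply/allP => l ls.
by rewrite tup_comm (eqP (hx l ls)) comm1g.
Qed.

Lemma allPRr (gT : finGroupType) k (s : seq 'I_k) (x y : tupG gT k) :
  all (fun l => y l == 1) s -> all (fun l => [~ x, y] l == 1) s.
Proof.
move=> /allP hx; apply/allP => l ls.
by rewrite tup_comm (eqP (hx l ls)) commg1.
Qed.

Unset Implicit Arguments.

Theorem lemma6p1 (gT : finGroupType) (G : {group gT}) (k : nat)
  (H : {group tupG gT k}) :
  pseudosimple G -> 0 < k ->
  H \subset fiberpow G k ->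
  (forall i : 'I_k, [set (x : tupG gT k) i | x in H] = G) ->
  exists w : nat, 0 < w <= k /\
    (exists iso : {morphism H >-> tupG gT w},
        isom H (fiberpow G w) iso /\
        (forall h, h \in H -> forall (i : 'I_k) (j : 'I_w),
            coset G^`(1) (iso h j) = coset G^`(1) (h i))) /\
    (exists (f : 'I_k -> 'I_w) (phi : 'I_k -> {perm gT}),
        (forall j : 'I_w, exists i : 'I_k, f i = j) /\
        (forall i, aut_over_ab G (phi i)) /\
        (H :=: [set ([ffun i => phi i (g (f i))] : tupG gT k)
                  | g : tupG gT w in fiberpow G w])).
Proof.
move=> psG k0 HF hs.
have HG : forall x, x \in H -> forall i, x i \in G.
  by move=> x /(subsetP HF) /fiberpowP[].
have Hco : forall x, x \in H -> forall i j, coset G^`(1) (x i) = coset G^`(1) (x j).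
  by move=> x /(subsetP HF) /fiberpowP[].
have Hsurj : forall i g, g \in G -> exists2 x, x \in H & x i = g.
  by move=> i g; rewrite -(hs i) => /imsetP[x Hx ->]; exists x.
have nDG : G \subset 'N(G^`(1)) by apply: normal_norm; apply: der_normal.
have inD : forall x, x \in H -> forall i j, x j = 1 -> x i \in G^`(1).
  move=> x Hx i j xj; apply: coset_idr; first exact: (subsetP nDG _ (HG x Hx i)).
  by rewrite (Hco x Hx i j) xj morph1.
pose rel (i j : 'I_k) := [forall x in H, (x j == 1) ==> (x i == 1)].
have relP : forall i j, reflect (forall x, x \in H -> x j = 1 -> x i = 1) (rel i j).
  move=> i j; apply: (iffP forall_inP) => h x Hx.
    by move=> xj; apply/eqP; move/implyP: (h x Hx); apply; apply/eqP.
  by apply/implyP => /eqP xj; apply/eqP; apply: h.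
have relsym : forall i j, rel i j -> rel j i.
  move=> i j /relP h; apply/relP; exact: rel_sym hs h.
have reltr : forall i j l, rel i j -> rel j l -> rel i l.
  move=> i j l /relP h1 /relP h2; apply/relP => x Hx xl; apply: h1 => //; exact: h2.
have relrefl : forall i, rel i i by move=> i; apply/relP.
pose rep (i : 'I_k) := [arg min_(j < i | rel i j) (j : nat)].
have repP : forall i, rel i (rep i) /\ forall j, rel i j -> rep i <= j.
  move=> i; rewrite /rep; case: (arg_minnP _ (relrefl i)) => j rij hj; split => //.
pose R := [set i | rep i == i].
have repR : forall i, rep i \in R.
  move=> i; rewrite inE; have [h1 h2] := repP i; have [h3 h4] := repP (rep i).
  apply/eqP/val_inj/eqP; rewrite eqn_leq h4 //=; apply: h2; exact: reltr h1 h3.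
have Rrel : forall r r', r \in R -> r' \in R -> rel r r' -> r = r'.
  move=> r r'; rewrite !inE => /eqP er /eqP er' h.
  apply/val_inj/eqP; rewrite eqn_leq.
  have := (repP r).2 r' h; rewrite er => ->.
  by have := (repP r').2 r (relsym _ _ h); rewrite er' => ->.
have DG : G^`(1) \subset G by apply: der_sub.
have claim : forall (s : seq 'I_k) i, i \in R -> i \notin s -> {subset s <= R} ->
  forall a, a \in G^`(1) -> exists2 x, x \in H & all (fun l => x l == 1) s && (x i == a).
  elim=> [|j s IH] i iR nis sR a aD.
    have [x Hx xi] := Hsurj i a (subsetP DG a aD).
    by exists x => //; rewrite xi eqxx.
  rewrite in_cons negb_or in nis; case/andP: nis => nij nis.
  have jR : j \in R by apply: sR; exact: mem_head.
  have sR' : {subset s <= R} by move=> l ls; apply: sR; rewrite in_cons ls orbT.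
  have nrel : ~~ rel i j.
    by apply/negP => h; move/negP: nij; apply; apply/eqP; exact: Rrel.
  have [x0 Hx0 /andP[x0j x0i]] : exists2 x, x \in H & (x j == 1) && (x i != 1).
    move: nrel; rewrite negb_forall_in => /exists_inP[x Hx].
    by rewrite negb_imply => ?; exists x.
  have HGi : forall x, x \in H -> x i \in G by move=> x Hx; exact: HG.
  have pair : forall b, b \in G^`(1) -> exists2 y, y \in H & (y j == 1) && (y i == b).
    apply: (fill (P := fun y => y j == 1)) => //.
    - exact: Hsurj.
    - by rewrite tup1.
    - by move=> x y /eqP xj /eqP yj; rewrite mulg_ffun xj yj mulg1.
    - by move=> x y /eqP xj; rewrite tup_conj xj conj1g.
    - by exists x0; rewrite // x0j x0i.
  have ntD : G^`(1) :!=: 1.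
    apply/trivgPn; exists (x0 i) => //; exact: inD x0 Hx0 i j (eqP x0j).
  have [a' [b' [a'D [b'D nab]]]] : exists a' b', a' \in G^`(1) /\ b' \in G^`(1) /\ [~ a', b'] != 1.
    case: (boolP [exists a' in G^`(1), exists b' in G^`(1), [~ a', b'] != 1]).
      by move=> /exists_inP[a' a'D /exists_inP[b' b'D nab]]; exists a', b'.
    move=> none; exfalso; move/negP: (ps_nonab psG ntD); apply.
    apply/centsP => u uD v vD; apply/commgP.
    move: none; rewrite negb_exists_in => /forall_inP /(_ u uD).
    by rewrite negb_exists_in => /forall_inP /(_ v vD); rewrite negbK.
  have [x Hx /andP[xs /eqP xi]] := IH i iR nis sR' a' a'D.
  have [y Hy /andP[/eqP yj /eqP yi]] := pair b' b'D.
  apply: (fill (G := G) (P := fun z => all (fun l => z l == 1) (j :: s))) => //.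
  - exact: Hsurj.
  - exact: allP1.
  - by move=> u v; apply: allPM.
  - by move=> u v; apply: allPJ.
  - exists [~ x, y]; first by apply: groupR.
    rewrite /= tup_comm yj commg1 eqxx /= allPRl //.
    by rewrite tup_comm xi yi.
pose i0 : 'I_k := Ordinal k0.
have r0R := repR i0.
have NG : forall g, g \in G -> g \in 'N(G^`(1)) by move=> g; apply: (subsetP nDG).
have fillR : forall t : 'I_k -> gT, (forall r, r \in R -> t r \in G) ->
  (forall r, r \in R -> coset G^`(1) (t r) = coset G^`(1) (t (rep i0))) ->
  forall s, {subset s <= R} ->
  exists2 h, h \in H & (coset G^`(1) (h (rep i0)) == coset G^`(1) (t (rep i0)))
                       && all (fun r => h r == t r) s.
  move=> t tG tco; elim=> [|j s IH] sR.
    have [h Hh hr] := Hsurj (rep i0) (t (rep i0)) (tG _ r0R).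
    by exists h => //; rewrite hr eqxx.
  have jR : j \in R by apply: sR; exact: mem_head.
  have sR' : {subset s <= R} by move=> l ls; apply: sR; rewrite in_cons ls orbT.
  have [h Hh /andP[/eqP hc hsl]] := IH sR'.
  case: (boolP (j \in s)) => js.
    by exists h => //; rewrite hc eqxx /= hsl andbT; exact: (allP hsl j js).
  have hjc : coset G^`(1) (h j) = coset G^`(1) (t j).
    by rewrite (Hco h Hh j (rep i0)) hc tco.
  have aD : (h j)^-1 * t j \in G^`(1).
    apply: coset_idr; first by rewrite groupM ?groupV ?NG ?HG ?tG.
    rewrite morphM ?morphV ?groupV ?NG ?HG ?tG //.
    by change ((coset G^`(1) (h j))^-1 * coset G^`(1) (t j) = 1); rewrite hjc mulVg.
  have [c Hc /andP[cs /eqP cj]] := claim s j jR js sR' _ aD.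
  exists (h * c); first by rewrite groupM.
  apply/andP; split.
    rewrite mulg_ffun morphM ?NG ?HG //.
    change (coset G^`(1) (h (rep i0)) * coset G^`(1) (c (rep i0)) ==
            coset G^`(1) (t (rep i0))).
    by rewrite hc (Hco c Hc (rep i0) j) cj (coset_id aD) mulg1.
  rewrite /= mulg_ffun cj mulKVg eqxx /=.
  apply/allP => r rs; rewrite mulg_ffun (eqP (allP cs r rs)) mulg1.
  exact: (allP hsl r rs).
pose f (i : 'I_k) : 'I_#|R| := enum_rank_in r0R (rep i).
have evf : forall i, enum_val (f i) = rep i.
  by move=> i; rewrite /f (enum_rankK_in r0R (repR i)).
have fev : forall j : 'I_#|R|, f (enum_val j) = j.
  move=> j; have jR := enum_valP j; rewrite inE in jR.
  by rewrite /f (eqP jR) enum_valK_in.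
pose isof (x : tupG gT k) : tupG gT #|R| := [ffun j => x (enum_val j)].
have isofE : forall x j, isof x j = x (enum_val j) by move=> x j; rewrite ffunE.
have isoM : {in [set: tupG gT k] &, {morph isof : x y / x * y}}.
  by move=> x y _ _; apply/ffunP => j; rewrite mulg_ffun !isofE mulg_ffun.
pose isoT : {morphism [set: tupG gT k] >-> tupG gT #|R|} := Morphism isoM.
pose iso := restrm (subsetT H) isoT.
have isoE : forall x, iso x = isof x by [].
have imH : iso @* H = fiberpow G #|R|.
  rewrite morphimEsub //; apply/eqP; rewrite eqEsubset; apply/andP; split.
    apply/subsetP => _ /imsetP[x Hx ->]; apply/fiberpowP; split.
      by move=> j /=; rewrite /restrm isofE; exact: HG.
    by move=> j j'; rewrite /= /restrm !isofE; exact: Hco.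
  apply/subsetP => g /fiberpowP[gG gco].
  pose t (i : 'I_k) := g (enum_rank_in r0R i).
  have sRR : {subset enum R <= R} by move=> r; rewrite mem_enum.
  have [h Hh /andP[_ ht]] := fillR t (fun r _ => gG _) (fun r _ => gco _ _) (enum R) sRR.
  apply/imsetP; exists h => //; apply/ffunP => j; rewrite /= /restrm isofE.
  have := allP ht (enum_val j); rewrite mem_enum enum_valP => /(_ isT) /eqP ->.
  by rewrite /t enum_valK_in.
have injiso : 'injm iso.
  apply/subsetP => x; rewrite ker_restrm => /setIP[Hx /morphpreP[_ /set1P e]].
  rewrite inE; apply/eqP/ffunP => i; rewrite tup1.
  have [ri _] := repP i; apply: (relP _ _ ri) => //.
  by move/ffunP: e => /(_ (f i)); rewrite /= isofE evf tup1.
exists #|R|; split.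
  apply/andP; split; first by apply/card_gt0P; exists (rep i0).
  by apply: leq_trans (max_card _) _; rewrite card_ord.
split.
  exists iso; split; first by rewrite -imH; apply/isomP; split.
  by move=> h Hh i j; rewrite /= /restrm isofE; exact: Hco.
have phiex : forall i, exists p : {perm gT}, (p \in Aut G) &&
    [forall g in G, coset G^`(1) (p g) == coset G^`(1) g] &&
    [forall x in H, p (x (rep i)) == x i].
  move=> i; have [rir _] := repP i; have rri := relsym _ _ rir.
  pose q := restrm (subsetT H) (@dffun_morphism _ (fun _ => gT) (rep i)).
  pose fi := restrm (subsetT H) (@dffun_morphism _ (fun _ => gT) i).
  have kq : forall x, (x \in 'ker q) = (x \in H) && (x (rep i) == 1).
    by move=> x; rewrite ker_restrm inHK.
  have kfi : forall x, (x \in 'ker fi) = (x \in H) && (x i == 1).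
    by move=> x; rewrite ker_restrm inHK.
  have sK : 'ker q \subset 'ker fi.
    apply/subsetP => x; rewrite kq kfi => /andP[Hx /eqP xr]; rewrite Hx /=.
    by apply/eqP; exact: (relP _ _ rir).
  have eK : 'ker fi = 'ker q.
    apply/eqP; rewrite eqEsubset sK andbT.
    apply/subsetP => x; rewrite kq kfi => /andP[Hx /eqP xr]; rewrite Hx /=.
    by apply/eqP; exact: (relP _ _ rri).
  pose ff := factm sK (subxx H).
  have qH : q @* H = G by rewrite morphim_restrm setIid morphimEsub ?subsetT // hs.
  have fiH : fi @* H = G by rewrite morphim_restrm setIid morphimEsub ?subsetT // hs.
  have injff : 'injm ff by apply/injm_factmP.
  have imff : ff @* (q @* H) = q @* H by rewrite morphim_factm fiH qH.
  pose p := aut injff imff.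
  have pE : forall x, x \in H -> p (x (rep i)) = x i.
    move=> x Hx; have qx : q x \in q @* H by apply: mem_morphim.
    by rewrite /p (autE injff imff qx); exact: (factmE sK (subxx H) Hx).
  exists p; apply/andP; split; first (apply/andP; split).
  - have e : Aut (q @* H) = Aut G by rewrite qH.
    by have := Aut_aut injff imff; rewrite e.
  - apply/forall_inP => g; rewrite -{1}qH => /morphimP[x _ Hx ->].
    by rewrite /= /restrm /= pE // (Hco x Hx i (rep i)).
  - by apply/forall_inP => x Hx; rewrite pE.
pose phi i := xchoose (phiex i).
have phiP : forall i, _ := fun i => xchooseP (phiex i).
have phiH : forall i x, x \in H -> phi i (x (rep i)) = x i.
  move=> i x Hx; have /andP[_ /forall_inP h] := phiP i; exact/eqP/h.
have eqx : forall x, x \in H -> ([ffun i => phi i (isof x (f i))] : tupG gT k) = x.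
  by move=> x Hx; apply/ffunP => i; rewrite ffunE isofE evf phiH.
exists f, phi; split.
  by move=> j; exists (enum_val j); exact: fev.
split.
  move=> i; have /andP[/andP[pa /forall_inP pc] _] := phiP i; split => // g Gg.
  exact/eqP/pc.
apply/setP => x; apply/idP/imsetP.
  move=> Hx; exists (isof x); last by rewrite eqx.
  by rewrite -imH; apply: mem_morphim.
by case=> g; rewrite -imH => /morphimP[y _ Hy ->] ->; rewrite /= /restrm eqx.
Qed.
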